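(* Assume (C1) the maximum likelihood estimator $\widehat{\theta}$ exists and is an interior point of $\Theta$, and (C2) the log-likelihood $\ell$ is strictly concave on $\Theta$. Let $\Theta_0\subseteq\Theta$ be nonempty and assume $F$ is continuous and strictly increasing. Then $$s(\Theta_0)=\sup_{\theta\in\Theta_0}\bigl(1-F(T_\theta)\bigr)=1-F(T_{\Theta_0}),$$ where $T_{\Theta_0}=2\bigl(\ell(\widehat{\theta})-\ell(\widehat{\theta}_0)\bigr)$ with $\widehat{\theta}_0=\arg\sup_{\theta\in\Theta_0}\ell(\theta)$ (i.e. $T_{\Theta_0}=2(\ell(\widehat{\theta})-\sup_{\theta\in\Theta_0}\ell(\theta))$).
   Context: Let $\Theta\subseteq\mathbb{R}^k$ be a parameter space of a parametric statistical model, $x$ the observed data, and $\ell(\theta)=\ell(\theta;x)$ the log-likelihood. Let $\widehat{\theta}=\arg\sup_{\theta\in\Theta}\ell(\theta)$ be the maximum likelihood estimator, and for $\theta\in\Theta$ put $T_\theta=2(\ell(\widehat{\theta})-\ell(\theta))\ge 0$. Let $F$ be a cumulative distribution function of a nonnegative random variable (in the paper, the (approximate) distribution of $T_{\theta_0}$ at the true parameter $\theta_0$, assumed not to depend on $\theta_0$). For $\alpha\in(0,1)$, let $F_\alpha$ be the $1-\alpha$ quantile of $F$, i.e. $F(F_\alpha)=1-\alpha$. The likelihood-based confidence region of level $\alpha$ is $\Lambda_\alpha=\{\theta\in\Theta: T_\theta\le F_\alpha\}$. For $\Theta_0\subseteq\Theta$, the $s$-value (evidence measure for $H_0:\theta\in\Theta_0$)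 is $$s(\Theta_0)=\max\{0,\ \sup\{\alpha\in(0,1):\ \Lambda_\alpha\cap\Theta_0\neq\varnothing\}\},$$ with the convention that the supremum of the empty set does not exceed $0$. *)

(* Defs.v *)
From Stdlib Require Import Reals Lra ClassicalEpsilon.
From Stdlib Require Vectors.Fin.
Open Scope R_scope.

Definition Rk (k : nat) : Type := Fin.t k -> R.

Definition set_Rk (k : nat) : Type := Rk k -> Prop.

(** Supremum of a set of reals (meaningful when a least upper bound exists,
    e.g. for nonempty sets bounded above; arbitrary otherwise). *)
Definition Rsup (E : R -> Prop) : R :=
  epsilon (inhabits 0) (fun s => is_lub E s).

(** x is an interior point of Theta (box neighbourhoods; same topology as
    the Euclidean one). *)
Definition interior_point {k : nat} (Theta : set_Rk k) (x : Rk k) : Prop :=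
  exists eps, 0 < eps /\
    forall y : Rk k, (forall i, Rabs (y i - x i) < eps) -> Theta y.

Definition strictly_concave_on {k : nat} (Theta : set_Rk k) (f : Rk k -> R)
  : Prop :=
  (forall x y t, Theta x -> Theta y -> 0 <= t <= 1 ->
     Theta (fun i => t * x i + (1 - t) * y i)) /\
  (forall x y t, Theta x -> Theta y -> x <> y -> 0 < t < 1 ->
     f (fun i => t * x i + (1 - t) * y i) > t * f x + (1 - t) * f y).

Definition is_cdf_nonneg (F : R -> R) : Prop :=
  (forall x y, x <= y -> F x <= F y) /\
  (forall x, x < 0 -> F x = 0) /\
  (forall x eps, 0 < eps -> exists d, 0 < d /\
      forall y, x <= y < x + d -> Rabs (F y - F x) < eps) /\
  (forall eps, 0 < eps -> exists M, forall x, M <= x -> Rabs (F x - 1) < eps).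

Definition strictly_increasing_on_support (F : R -> R) : Prop :=
  forall x y, 0 <= x -> x < y -> F x < F y.

Definition Tstat {k : nat} (l : Rk k -> R) (thetahat theta : Rk k) : R :=
  2 * (l thetahat - l theta).

(** The (1 - alpha)-quantile F_alpha is a value q with F q = 1 - alpha.
    Confidence region Lambda_alpha = {theta in Theta : T_theta <= F_alpha}. *)
Definition Lambda {k : nat} (F : R -> R) (Theta : set_Rk k) (l : Rk k -> R)
  (thetahat : Rk k) (alpha : R) : set_Rk k :=
  fun theta => Theta theta /\
    exists q, F q = 1 - alpha /\ Tstat l thetahat theta <= q.

Definition svalue_set {k : nat} (F : R -> R) (Theta : set_Rk k) (l : Rk k -> R)
  (thetahat : Rk k) (Theta0 : set_Rk k) : R -> Prop :=
  fun alpha => 0 < alpha < 1 /\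
    exists theta, Lambda F Theta l thetahat alpha theta /\ Theta0 theta.

(** s(Theta0) = max{0, sup{alpha in (0,1) : Lambda_alpha cap Theta0 <> empty}},
    with the sup of the empty set taken to be (at most) 0. *)
Definition svalue {k : nat} (F : R -> R) (Theta : set_Rk k) (l : Rk k -> R)
  (thetahat : Rk k) (Theta0 : set_Rk k) : R :=
  let A := svalue_set F Theta l thetahat Theta0 in
  match excluded_middle_informative (exists a, A a) with
  | left _ => Rmax 0 (Rsup A)
  | right _ => 0
  end.

Definition Tstat_set {k : nat} (l : Rk k -> R) (thetahat : Rk k)
  (Theta0 : set_Rk k) : R :=
  2 * (l thetahat - Rsup (fun v => exists theta, Theta0 theta /\ v = l theta)).

(* Main.v *)
Require Import Defs.
From Stdlib Require Import Reals Lra ClassicalEpsilon Classical.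
Open Scope R_scope.

Lemma Rsup_eq (E : R -> Prop) s : is_lub E s -> Rsup E = s.
Proof.
  intro H. unfold Rsup.
  apply (is_lub_u E); [|exact H].
  apply (epsilon_spec (inhabits 0) (fun s => is_lub E s)). exists s; exact H.
Qed.

Lemma F_le1 F : is_cdf_nonneg F -> forall x, F x <= 1.
Proof.
  intros [Hm [H0 [Hr Hl]]] x. destruct (Rle_dec (F x) 1) as [h|h]; auto.
  exfalso. destruct (Hl (F x - 1)) as [M HM]; [lra|].
  specialize (HM (Rmax M x) (Rmax_l _ _)).
  pose proof (Hm x (Rmax M x) (Rmax_r _ _)).
  apply Rabs_def2 in HM. lra.
Qed.

Lemma F_ivt F : is_cdf_nonneg F -> continuity F -> forall c, 0 < c < 1 ->
  exists q, F q = c.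
Proof.
  intros HF Hc c Hc01. pose proof HF as [Hm [H0 [Hr Hl]]].
  destruct (Hl (1 - c)) as [M HM]; [lra|].
  specialize (HM (Rmax M 0) (Rmax_l _ _)). apply Rabs_def2 in HM.
  assert (Hlt : -1 < Rmax M 0) by (pose proof (Rmax_r M 0); lra).
  destruct (IVT (fun x => F x - c) (-1) (Rmax M 0)) as [z [_ Hz]].
  - apply continuity_minus; [exact Hc| apply continuity_const; intros ? ?; reflexivity].
  - exact Hlt.
  - rewrite (H0 (-1)) by lra. lra.
  - simpl. lra.
  - exists z. simpl in Hz. lra.
Qed.

Theorem lemma3p2 (k : nat) (Theta : set_Rk k) (l : Rk k -> R)
  (thetahat : Rk k) (F : R -> R) (Theta0 : set_Rk k)
  (* thetahat is the maximum likelihood estimator over Theta *)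
  (Hmle_in : Theta thetahat)
  (Hmle : forall theta, Theta theta -> l theta <= l thetahat)
  (* (C1) interior point *)
  (Hint : interior_point Theta thetahat)
  (* (C2) strict concavity *)
  (Hconc : strictly_concave_on Theta l)
  (* Theta0 nonempty subset of Theta *)
  (Hsub : forall theta, Theta0 theta -> Theta theta)
  (Hne : exists theta, Theta0 theta)
  (* F: cdf of a nonnegative r.v., continuous, strictly increasing *)
  (HF : is_cdf_nonneg F)
  (HFcont : continuity F)
  (HFinc : strictly_increasing_on_support F) :
  svalue F Theta l thetahat Theta0
    = Rsup (fun v => exists theta, Theta0 theta /\ v = 1 - F (Tstat l thetahat theta))
  /\ Rsup (fun v => exists theta, Theta0 theta /\ v = 1 - F (Tstat l thetahat theta))
    = 1 - F (Tstat_set l thetahat Theta0).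
Proof.
  pose proof HF as [Hm [H0 [Hr Hl]]].
  set (LE := fun v => exists theta, Theta0 theta /\ v = l theta).
  destruct (completeness LE) as [S HS].
  { exists (l thetahat). intros v [th [Hth ->]]. apply Hmle, Hsub, Hth. }
  { destruct Hne as [th Hth]. exists (l th). exists th. auto. }
  assert (HSeq : Rsup LE = S) by (apply Rsup_eq; exact HS).
  assert (HSle : S <= l thetahat).
  { apply HS. intros v [th [Hth ->]]. apply Hmle, Hsub, Hth. }
  set (T0 := 2 * (l thetahat - S)).
  assert (HT0 : Tstat_set l thetahat Theta0 = T0).
  { unfold Tstat_set, T0. fold LE. rewrite HSeq. reflexivity. }
  rewrite HT0.
  set (B := fun v => exists theta, Theta0 theta /\ v = 1 - F (Tstat l thetahat theta)).
  assert (HTge : forall th, Theta0 th -> T0 <= Tstat l thetahat th).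
  { intros th Hth. unfold Tstat, T0. assert (l th <= S) by (apply HS; exists th; auto). lra. }
  assert (HTnn : forall th, Theta0 th -> 0 <= Tstat l thetahat th).
  { intros th Hth. pose proof (HTge th Hth). unfold T0 in *. lra. }
  assert (Hbpos : forall th, Theta0 th -> 0 < 1 - F (Tstat l thetahat th)).
  { intros th Hth. pose proof (HFinc _ (Tstat l thetahat th + 1) (HTnn th Hth)).
    pose proof (F_le1 F HF (Tstat l thetahat th + 1)). lra. }
  assert (HB : is_lub B (1 - F T0)).
  { split.
    - intros v [th [Hth ->]]. pose proof (Hm _ _ (HTge th Hth)). lra.
    - intros u Hu. destruct (Rle_dec (1 - F T0) u) as [h|h]; auto. exfalso.
      destruct (Hr T0 (1 - F T0 - u)) as [d [Hd Hdd]]; [lra|].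
      assert (Hex : exists th, Theta0 th /\ S - d/4 < l th).
      { apply NNPP. intro Hn. assert (S <= S - d/4); [|lra].
        apply HS. intros v [th [Hth ->]]. apply Rnot_lt_le. intro Hc. apply Hn.
        exists th; auto. }
      destruct Hex as [th [Hth Hlt]].
      assert (Hin : T0 <= Tstat l thetahat th < T0 + d).
      { split; [apply HTge; exact Hth|]. unfold Tstat, T0. lra. }
      specialize (Hdd _ Hin). apply Rabs_def2 in Hdd.
      assert (1 - F (Tstat l thetahat th) <= u) by (apply Hu; exists th; auto).
      lra. }
  assert (HBeq : Rsup B = 1 - F T0) by (apply Rsup_eq; exact HB).
  split; [|exact HBeq].
  rewrite HBeq.
  set (A := svalue_set F Theta l thetahat Theta0).
  assert (HinA : forall th a, Theta0 th -> 0 < a < 1 -> a <= 1 - F (Tstat l thetahat th) -> A a).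
  { intros th a Hth Ha Hab. split; [exact Ha|]. exists th. split; [|exact Hth].
    split; [apply Hsub; exact Hth|].
    destruct (F_ivt F HF HFcont (1 - a)) as [q Hq]; [lra|].
    exists q. split; [exact Hq|]. apply Rnot_lt_le. intro Hc.
    assert (0 <= q).
    { apply Rnot_lt_le. intro Hq0. rewrite H0 in Hq by exact Hq0. lra. }
    pose proof (HFinc _ _ H Hc). lra. }
  assert (HA : is_lub A (1 - F T0)).
  { split.
    - intros a [Ha [th [[_ [q [Hq Hle]]] Hth]]].
      pose proof (Hm _ _ Hle). pose proof (Hm _ _ (HTge th Hth)). lra.
    - intros u Hu. destruct (Rle_dec (1 - F T0) u) as [h|h]; auto. exfalso.
      assert (Hex : exists th, Theta0 th /\ u < 1 - F (Tstat l thetahat th)).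
      { apply NNPP. intro Hn. assert (1 - F T0 <= u); [|lra].
        apply HB. intros v [th [Hth ->]]. apply Rnot_lt_le. intro Hc. apply Hn.
        exists th; auto. }
      destruct Hex as [th [Hth Hlt]].
      pose proof (Hbpos th Hth). pose proof (Rmax_l u 0). pose proof (Rmax_r u 0).
      assert (Rmax u 0 < 1 - F (Tstat l thetahat th)).
      { unfold Rmax. destruct (Rle_dec u 0); lra. }
      pose proof (Hm _ _ (HTnn th Hth)).
      assert (Hf0 : 0 <= F 0).
      { pose proof (H0 (-1) ltac:(lra)). pose proof (Hm (-1) 0 ltac:(lra)). lra. }
      set (a := (Rmax u 0 + (1 - F (Tstat l thetahat th))) / 2).
      assert (A a) by (apply (HinA th); [exact Hth| unfold a; lra | unfold a; lra]).
      assert (a <= u) by (apply Hu; assumption).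
      unfold a in *. lra. }
  unfold svalue. fold A.
  destruct (excluded_middle_informative (exists a, A a)) as [Hx|Hx].
  - rewrite (Rsup_eq A _ HA). apply Rmax_right.
    destruct Hne as [th Hth]. pose proof (Hbpos th Hth).
    assert (1 - F (Tstat l thetahat th) <= 1 - F T0) by (apply HB; exists th; auto).
    lra.
  - exfalso. apply Hx. destruct Hne as [th Hth]. pose proof (Hbpos th Hth).
    pose proof (Hm _ _ (HTnn th Hth)).
    assert (Hf0 : 0 <= F 0).
    { pose proof (H0 (-1) ltac:(lra)). pose proof (Hm (-1) 0 ltac:(lra)). lra. }
    exists ((1 - F (Tstat l thetahat th)) / 2). apply (HinA th); [exact Hth| lra | lra].
Qed.
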